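(* Let $(S,\mathcal F,\mathcal L)$ be a $p$-local finite group and let $V\le Z(S)$ be an $\mathcal F$-weakly closed subgroup such that $\mathrm{Aut}_{\mathcal F}(V)$ is a $p$-group. Then $V$ is central in $(S,\mathcal F,\mathcal L)$, that is, $(S,\mathcal F,\mathcal L)=(C_S(V),C_{\mathcal F}(V),C_{\mathcal L}(V))$; in particular $\mathcal F=C_{\mathcal F}(V)$.
   Context: A subgroup of $S$ is $\mathcal F$-weakly closed if no other subgroup of $S$ is $\mathcal F$-conjugate to it. For $Q\le S$, the centralizer fusion system $C_{\mathcal F}(Q)$ is the fusion system over $C_S(Q)$ with $\mathrm{Hom}_{C_{\mathcal F}(Q)}(P,P')=\{\phi\in\mathrm{Hom}_{\mathcal F}(P,P')\mid\exists\psi\in\mathrm{Hom}_{\mathcal F}(PQ,P'Q),\ \psi|_P=\phi,\ \psi|_Q=\mathrm{id}\}$. For $V\le Z(S)$ (so $C_S(V)=S$), $C_{\mathcal L}(V)$ denotes the subcategory of $\mathcal L$ with $\mathrm{Mor}_{C_{\mathcal L}(V)}(P,Q)=\pi^{-1}(\mathrm{Hom}_{C_{\mathcal F}(V)}(P,Q))$ for $\mathcal F$-centric $P,Q$. Let $p$ be a prime and $S$ a finite $p$-group. For $P,Q\le S$, $\mathrm{Hom}_S(P,Q)$ is the set of maps $c_g\colon x\mapsto gxg^{-1}$ with $g\in S$, $gPg^{-1}\le Q$, and $\mathrm{Aut}_S(P)=\mathrm{Hom}_S(P,P)$. A fusion system $\mathcal F$ over $S$ is a category whose objects are the subgroups of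 $S$, with $\mathrm{Hom}_S(P,Q)\subseteq\mathrm{Hom}_{\mathcal F}(P,Q)\subseteq \mathrm{Inj}(P,Q)$, such that every morphism factors as an $\mathcal F$-isomorphism followed by an inclusion. Subgroups are $\mathcal F$-conjugate if they are isomorphic in $\mathcal F$. $P$ is fully centralized (resp. fully normalized) if $|C_S(P)|\ge |C_S(P')|$ (resp. $|N_S(P)|\ge|N_S(P')|$) for all $P'$ $\mathcal F$-conjugate to $P$. $\mathcal F$ is saturated if (I) every fully normalized $P$ is fully centralized and $\mathrm{Aut}_S(P)$ is a Sylow $p$-subgroup of $\mathrm{Aut}_{\mathcal F}(P)$, and (II) whenever $\phi\in\mathrm{Hom}_{\mathcal F}(P,S)$ with $\phi(P)$ fully centralized, $\phi$ extends to a morphism in $\mathcal F$ defined on $N_\phi=\{g\in N_S(P):\phi c_g\phi^{-1}\in \mathrm{Aut}_S(\phi(P))\}$. $P$ is $\mathcal F$-centric if $C_S(P')\le P'$ for all $P'$ $\mathcal F$-conjugate to $P$; $\mathcal F^c$ is the full subcategory on these. A centric linking system associated to $\mathcal F$ is a category $\mathcal L$ with objects the $\mathcal F$-centric subgroups, a functor $\pi\colon\mathcal L\to\mathcal F^c$ which is the identity on objects, and monomorphisms $\delta_P\colon P\to\mathrm{Aut}_{\mathcal L}(P)$, such that (A) $Z(P)$ (via $\delta_P$) acts freely on $\mathrm{Mor}_{\mathcal L}(P,Q)$ by composition and $\pi$ induces a bijection $\mathrm{Mor}_{\mathcal L}(P,Q)/Z(P)\to\mathrm{Hom}_{\mathcal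 F}(P,Q)$; (B) $\pi(\delta_P(g))=c_g$ for $g\in P$; (C) $f\circ\delta_P(g)=\delta_Q(\pi(f)(g))\circ f$ for $f\in\mathrm{Mor}_{\mathcal L}(P,Q)$, $g\in P$. A $p$-local finite group is a triple $(S,\mathcal F,\mathcal L)$ with $\mathcal F$ a saturated fusion system over $S$ and $\mathcal L$ an associated centric linking system. *)

(* Defs.v *)
From HB Require Import structures.
From mathcomp Require Import all_boot all_fingroup pgroup center.
Set Implicit Arguments. Unset Strict Implicit. Unset Printing Implicit Defensive.

Local Open Scope group_scope.

(* Conventions.
   * A morphism P -> Q between subgroups of S is represented by a finite
     function f : {ffun gT -> gT}, normalized so that f x = 1 for x \notin P.
   * A fusion system over S is a boolean predicate F P Q f
     ("f \in Hom_F(P,Q)"), indexed by subsets of gT; the axioms force P, Q to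
     be subgroups of S.
   * Paper's c_g : x |-> g x g^-1 is  x |-> x ^ g^-1  in MathComp. *)

Section Fusion.
Variable gT : finGroupType.

Definition fres (P : {set gT}) (f : gT -> gT) : {ffun gT -> gT} :=
  [ffun x => if x \in P then f x else 1].

Definition fcomp (P : {set gT}) (g f : {ffun gT -> gT}) : {ffun gT -> gT} :=
  fres P (fun x => g (f x)).

Definition finv (P : {set gT}) (f : {ffun gT -> gT}) : {ffun gT -> gT} :=
  fres (f @: P) (fun z => odflt 1 [pick x in P | f x == z]).

Definition cmap (P : {set gT}) (g : gT) : {ffun gT -> gT} :=
  fres P (fun x => x ^ g^-1).

Definition HomS (S P Q : {set gT}) : pred {ffun gT -> gT} :=
  [pred f | [exists g in S, (P :^ g^-1 \subset Q) && (f == cmap P g)]].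

Definition injhom (P Q : {set gT}) (f : {ffun gT -> gT}) : bool :=
  [&& [forall x, (x \notin P) ==> (f x == 1)],
      [forall x in P, forall y in P, f (x * y) == f x * f y],
      [forall x in P, forall y in P, (f x == f y) ==> (x == y)] &
      (f @: P \subset Q)].

Definition fusion_system (S : {group gT})
    (F : {set gT} -> {set gT} -> pred {ffun gT -> gT}) : Prop :=
  [/\
      (forall P Q f, F P Q f ->
         [/\ group_set P, group_set Q, P \subset S & Q \subset S]),
      (forall P Q : {group gT}, P \subset S -> Q \subset S ->
         forall f, HomS S P Q f -> F P Q f),
      (forall P Q f, F P Q f -> injhom P Q f),
      (forall P Q R f g, F P Q f -> F Q R g -> F P R (fcomp P g f)) &
      (forall P Q f, F P Q f ->
         F P (f @: P) f /\
         exists g, [/\ F (f @: P) P g, fcomp P g f = fres P id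
                     & fcomp (f @: P) f g = fres (f @: P) id])].

Variable (S : {group gT}) (F : {set gT} -> {set gT} -> pred {ffun gT -> gT}).

Definition Fconj (P P' : {set gT}) : bool :=
  [exists f, F P P' f && (f @: P == P')].

Definition fully_centralized (P : {set gT}) : Prop :=
  forall P', Fconj P P' -> #|'C_S(P')| <= #|'C_S(P)|.

Definition fully_normalized (P : {set gT}) : Prop :=
  forall P', Fconj P P' -> #|'N_S(P')| <= #|'N_S(P)|.

Definition AutF (P : {set gT}) : {set {ffun gT -> gT}} := [set f | F P P f].
Definition AutS (P : {set gT}) : {set {ffun gT -> gT}} := [set f | HomS S P P f].

Definition Nphi (P : {set gT}) (f : {ffun gT -> gT}) : {set gT} :=
  [set g in 'N_S(P) |
     fcomp (f @: P) f (fcomp (f @: P) (cmap P g) (finv P f)) \in AutS (f @: P)].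

Definition saturated_fusion_system (p : nat) : Prop :=
  [/\ fusion_system S F,
      (* axiom (I); Sylow p-subgroup = subgroup of order the p-part *)
      (forall P : {group gT}, P \subset S -> fully_normalized P ->
         fully_centralized P /\ (#|AutS P| = (#|AutF P|)`_p)%N) &
      (forall (P : {group gT}) f, F P S f -> fully_centralized (f @: P) ->
         exists psi, F (Nphi P f) S psi /\ {in P, psi =1 f})].

Definition Fcentric (P : {set gT}) : bool :=
  [&& group_set P, P \subset S &
      [forall P' : {set gT}, Fconj P P' ==> ('C_S(P') \subset P')]].

Definition weakly_closed (V : {set gT}) : Prop :=
  forall P', Fconj V P' -> P' = V.

Definition CF (V P Q : {set gT}) (f : {ffun gT -> gT}) : bool :=
  [&& P \subset 'C_S(V), Q \subset 'C_S(V), F P Q f &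
      [exists psi : {ffun gT -> gT},
         [&& F (P * V) (Q * V) psi,
             [forall x in P, psi x == f x] &
             [forall v in V, psi v == v]]]].

End Fusion.

(* Data of a category L with objects (sets of) subgroups, functor pi,
   and the maps delta_P. lcomp g f is "g o f". *)
Record linking_data (gT : finGroupType) := LinkingData {
  lmor : Type;
  ldom : lmor -> {set gT};
  lcod : lmor -> {set gT};
  lid : {set gT} -> lmor;
  lcomp : lmor -> lmor -> lmor;
  lpi : lmor -> {ffun gT -> gT};
  ldelta : {set gT} -> gT -> lmor }.

Section Linking.
Variables (gT : finGroupType) (S : {group gT})
  (F : {set gT} -> {set gT} -> pred {ffun gT -> gT}) (L : linking_data gT).

Local Notation Mor := (lmor L).
Local Notation dom := (@ldom _ L).
Local Notation cod := (@lcod _ L).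
Local Notation idm := (@lid _ L).
Local Notation comp := (@lcomp _ L).
Local Notation pi := (@lpi _ L).
Local Notation delta := (@ldelta _ L).
Local Notation centric := (Fcentric S F).

Definition centric_linking_system : Prop :=
  [/\
   [/\ (forall m : Mor, centric (dom m) && centric (cod m)),
       (forall P, centric P -> dom (idm P) = P /\ cod (idm P) = P),
       (forall f g : Mor, cod f = dom g ->
          dom (comp g f) = dom f /\ cod (comp g f) = cod g),
       (forall f : Mor, comp f (idm (dom f)) = f /\ comp (idm (cod f)) f = f) &
       (forall f g h : Mor, cod f = dom g -> cod g = dom h ->
          comp h (comp g f) = comp (comp h g) f)],
   [/\ (forall m : Mor, F (dom m) (cod m) (pi m)),
       (forall P, centric P -> pi (idm P) = fres P id) &
       (forall f g : Mor, cod f = dom g ->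
          pi (comp g f) = fcomp (dom f) (pi g) (pi f))],
   (forall P, centric P ->
      [/\ (forall x, x \in P -> dom (delta P x) = P /\ cod (delta P x) = P),
          delta P 1 = idm P,
          {in P &, forall x y, delta P (x * y) = comp (delta P x) (delta P y)} &
          {in P &, injective (delta P)}]),
   [/\ (forall (m : Mor) z, z \in 'Z(dom m) ->
          comp m (delta (dom m) z) = m -> z = 1),
       (forall P Q, centric P -> centric Q -> forall f, F P Q f ->
          exists m : Mor, [/\ dom m = P, cod m = Q & pi m = f]) &
       (forall m m' : Mor, dom m = dom m' -> cod m = cod m' -> pi m = pi m' ->
          exists2 z, z \in 'Z(dom m) & m' = comp m (delta (dom m) z))] &
   (forall P, centric P -> forall g, g \in P -> pi (delta P g) = cmap P g) /\
   (forall (m : Mor) g, g \in dom m ->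
      comp m (delta (dom m) g) = comp (delta (cod m) (pi m g)) m)].

End Linking.

(* Main.v *)
Require Import Defs.
From HB Require Import structures.
From mathcomp Require Import all_boot all_fingroup pgroup center.
Set Implicit Arguments. Unset Strict Implicit. Unset Printing Implicit Defensive.
Local Open Scope group_scope.

Section Aux.
Variables (gT : finGroupType) (S : {group gT})
  (F : {set gT} -> {set gT} -> pred {ffun gT -> gT}).
Hypothesis FS : fusion_system S F.

Lemma F_obj P Q f : F P Q f -> [/\ group_set P, group_set Q, P \subset S & Q \subset S].
Proof. by case: FS => H _ _ _ _; apply: H. Qed.

Lemma F_inj P Q f : F P Q f -> injhom P Q f.
Proof. by case: FS => _ _ H _ _; apply: H. Qed.

Lemma F_out P Q f x : F P Q f -> x \notin P -> f x = 1.
Proof. by move/F_inj=> /and4P[/forallP H _ _ _] xP; apply/eqP; have:= H x; rewrite xP. Qed.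

Lemma F_mul P Q f : F P Q f -> {in P &, forall x y, f (x * y) = f x * f y}.
Proof. by move/F_inj=> /and4P[_ /forall_inP H _ _] x y xP yP; apply/eqP; have /forall_inP := H x xP; apply. Qed.

Lemma F_injf P Q f : F P Q f -> {in P &, injective f}.
Proof. by move/F_inj=> /and4P[_ _ /forall_inP H _] x y xP yP e; apply/eqP; have /forall_inP := H x xP; move/(_ y yP)/implyP; apply; rewrite e. Qed.

Lemma F_im P Q f : F P Q f -> f @: P \subset Q.
Proof. by move/F_inj=> /and4P[]. Qed.

Lemma F_in P Q f x : F P Q f -> x \in P -> f x \in Q.
Proof. by move=> H xP; apply: (subsetP (F_im H)); apply: imset_f. Qed.

Lemma F_1 P Q f : F P Q f -> f 1 = 1.
Proof.
move=> H; have [gP _ _ _] := F_obj H; have P1 : 1 \in P by case/andP: gP.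
have := F_mul H P1 P1; rewrite mulg1 => e.
by apply: (mulgI (f 1)); rewrite -e mulg1.
Qed.

Lemma F_V P Q f x : F P Q f -> x \in P -> f x^-1 = (f x)^-1.
Proof.
move=> H xP; have [gP _ _ _] := F_obj H; pose G := Group gP.
have xiP : x^-1 \in G by rewrite groupV.
have := F_mul H xP xiP; rewrite mulgV (F_1 H) => /esym e.
by apply: (mulgI (f x)); rewrite e mulgV.
Qed.

Lemma F_HomS (P Q : {group gT}) f : P \subset S -> Q \subset S -> HomS S P Q f -> F P Q f.
Proof. by move=> PS QS Hf; case: FS => _ H _ _ _; apply: H. Qed.

Lemma F_comp P Q R f g : F P Q f -> F Q R g -> F P R (fcomp P g f).
Proof. by case: FS => _ _ _ H _; apply: H. Qed.

Lemma F_fact P Q f : F P Q f -> F P (f @: P) f /\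
         exists g, [/\ F (f @: P) P g, fcomp P g f = fres P id
                     & fcomp (f @: P) f g = fres (f @: P) id].
Proof. by case: FS => _ _ _ _ H; apply: H. Qed.

Lemma cmap1 (P : {set gT}) : cmap P 1 = fres P id.
Proof. by apply/ffunP=> x; rewrite !ffunE invg1 conjg1. Qed.

Lemma F_incl (A B : {group gT}) : A \subset B -> B \subset S -> F A B (fres A id).
Proof.
move=> AB BS; rewrite -cmap1; apply: F_HomS => //; first exact: subset_trans BS.
by apply/existsP; exists 1; rewrite group1 invg1 conjsg1 AB eqxx.
Qed.

Lemma F_restr A B f (A' : {group gT}) : F A B f -> A' \subset A -> F A' B (fres A' f).
Proof.
move=> H sA; have [gA _ AS _] := F_obj H.
have -> : fres A' f = fcomp A' f (fres A' id).
  by apply/ffunP=> x; rewrite !ffunE; case: ifP => // ->.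
apply: F_comp H; exact: (F_incl (A := A') (B := Group gA)).
Qed.

Lemma F_enl A B f (C : {group gT}) : F A B f -> B \subset C -> C \subset S -> F A C f.
Proof.
move=> H BC CS; have [_ gB _ _] := F_obj H.
have -> : f = fcomp A (fres B id) f.
  apply/ffunP=> x; rewrite !ffunE; case: ifP => xA.
    by rewrite (F_in H xA).
  by rewrite (F_out H) ?xA // if_same.
apply: F_comp H _; exact: (F_incl (A := Group gB)).
Qed.

Lemma fcompE (P : {set gT}) (g f : {ffun gT -> gT}) x : x \in P -> fcomp P g f x = g (f x).
Proof. by move=> xP; rewrite ffunE xP. Qed.

Lemma fresE (P : {set gT}) (f : gT -> gT) x : x \in P -> fres P f x = f x.
Proof. by move=> xP; rewrite ffunE xP. Qed.

Lemma Fconj_refl (Y : {group gT}) : Y \subset S -> Fconj F Y Y.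
Proof.
move=> YS; apply/existsP; exists (fres Y id); rewrite F_incl //=.
by apply/eqP; rewrite -[RHS]imset_id; apply: eq_in_imset => x xY; rewrite fresE.
Qed.

Lemma Fconj_trans X Y Z : Fconj F X Y -> Fconj F Y Z -> Fconj F X Z.
Proof.
case/existsP=> f /andP[Hf /eqP eY]; case/existsP=> g /andP[Hg /eqP eZ].
apply/existsP; exists (fcomp X g f); rewrite (F_comp Hf) ?eY //.
rewrite -eZ -eY -imset_comp; apply/eqP/eq_in_imset=> x xX; exact: fcompE.
Qed.

End Aux.
Section Main.
Variables (gT : finGroupType) (p : nat) (S : {group gT})
  (F : {set gT} -> {set gT} -> pred {ffun gT -> gT}) (V : {group gT}).
Hypothesis FS : fusion_system S F.
Hypothesis satI : forall P : {group gT}, P \subset S -> fully_normalized S F P ->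
         fully_centralized S F P /\ (#|AutS S P| = (#|AutF F P|)`_p)%N.
Hypothesis satII : forall (P : {group gT}) f, F P S f -> fully_centralized S F (f @: P) ->
         exists psi, F (Nphi S P f) S psi /\ {in P, psi =1 f}.
Hypothesis VZ : V \subset 'Z(S).
Hypothesis wc : weakly_closed F V.
Hypothesis pn : p.-nat #|AutF F V|.

Lemma VS : V \subset S.
Proof. exact: subset_trans VZ (center_sub S). Qed.

Lemma Vcent (A : {set gT}) : A \subset S -> V \subset 'C(A).
Proof.
move=> AS; apply: subset_trans VZ _; apply: subset_trans (subsetIr _ _) _.
exact: centS.
Qed.

Lemma Vcomm v x : v \in V -> x \in S -> commute v x.
Proof.
move=> vV xS; have xS' : [set x] \subset S by rewrite sub1set.
by have /centP := subsetP (Vcent xS') v vV; apply; rewrite set11.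
Qed.

Lemma AutSV : AutS S V = [set fres V id].
Proof.
apply/setP=> f; rewrite !inE; apply/existsP/eqP.
  case=> g /andP[gS /andP[_ /eqP->]]; apply/ffunP=> x; rewrite !ffunE; case: ifP=> // xV.
  by rewrite conjgE (commuteV (Vcomm xV gS)) mulKg.
by move->; exists 1; rewrite group1 invg1 conjsg1 subxx cmap1 eqxx.
Qed.

Lemma AutFV f : F V V f -> f = fres V id.
Proof.
move=> Hf.
have fnV : fully_normalized S F V by move=> P' /wc ->.
have [_ e] := satI VS fnV.
rewrite AutSV cards1 part_pnat_id // in e.
have /cards1P [k ek] : #|AutF F V| == 1%N by rewrite -e.
have h1 : f \in AutF F V by rewrite inE.
have h2 : fres V id \in AutF F V by rewrite inE (F_incl FS) // VS.
by move: h1 h2; rewrite ek !inE => /eqP -> /eqP ->.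
Qed.

Lemma exist_fc (Y : {group gT}) : Y \subset S ->
  exists R, Fconj F Y R /\ fully_centralized S F R.
Proof.
move=> YS.
have := @arg_maxnP _ (Y : {set gT}) (fun R => Fconj F Y R) (fun R => #|'C_S(R)|) (Fconj_refl FS YS).
case=> R hYR hmax.
exists R; split=> // P' hRP'; apply: hmax; exact: (Fconj_trans FS hYR hRP').
Qed.

Lemma AV_group (A : {group gT}) : A \subset S -> group_set (A * V).
Proof.
move=> AS; apply/comm_group_setP; apply: normC.
apply: subset_trans (cent_sub _); rewrite centsC; exact: Vcent.
Qed.


Lemma sub_Nphi (A : {group gT}) h : F A S h -> A * V \subset Nphi S A h.
Proof.
move=> Hh; have [_ _ AS _] := F_obj FS Hh.
have [HY _] := F_fact FS Hh; have [_ gY _ _] := F_obj FS HY.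
apply/subsetP => g /mulsgP[a v aA vV ->]; rewrite inE.
have aS := subsetP AS a aA; have vS := subsetP VS v vV.
apply/andP; split.
  rewrite inE groupM //= groupM //; first exact: (subsetP (normG A) a aA).
  exact: (subsetP (cent_sub A) v (subsetP (Vcent AS) v vV)).
rewrite inE; apply/existsP; exists (h a); rewrite (F_in FS Hh aA) /=.
have haY : h a \in h @: A by apply: imset_f.
apply/andP; split.
  by rewrite (conjGid (G := Group gY)) // groupV.
apply/eqP/ffunP=> z; rewrite [in RHS]ffunE; case: ifP => zY; last by rewrite ffunE zY.
rewrite fcompE // fcompE // /Defs.finv fresE //.
case: pickP => [y /andP[yA /eqP hy]|none]; last first.
  by case/imsetP: zY => y yA e; have := none y; rewrite yA e eqxx.
rewrite /cmap fresE //= invMg conjgM.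
have yS := subsetP AS y yA.
have -> : y ^ v^-1 = y by rewrite conjgE invgK mulgA (Vcomm vV yS) mulgK.
have aiA : a^-1 \in A by rewrite groupV.
rewrite conjgE invgK (F_mul FS Hh) ?groupM // (F_mul FS Hh) // (F_V FS Hh) //.
by rewrite hy conjgE invgK mulgA.
Qed.

Lemma Ext (A : {group gT}) h : F A S h -> fully_centralized S F (h @: A) ->
  exists chi, [/\ F (A * V) S chi, {in A, chi =1 h} & {in V, chi =1 id}].
Proof.
move=> Hh fc; have [_ _ AS _] := F_obj FS Hh.
have [psi [Hpsi epsi]] := satII Hh fc.
pose AV := Group (AV_group AS).
have sAV : AV \subset Nphi S A h by apply: sub_Nphi.
have Hchi := F_restr FS Hpsi sAV.
exists (fres AV psi); split => //.
  by move=> x xA; rewrite fresE ?epsi // (subsetP (mulG_subl V A)).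
have HV := F_restr FS Hchi (mulG_subr A V).
have [HV' _] := F_fact FS HV.
have cV : Fconj F V (fres V (fres AV psi) @: V).
  by apply/existsP; exists (fres V (fres AV psi)); rewrite HV' eqxx.
have e := wc cV.
rewrite e in HV'.
move=> v vV; have := congr1 (fun f : {ffun gT -> gT} => f v) (AutFV HV').
have vAV : v \in AV by rewrite (subsetP (mulG_subr A V)).
by rewrite /= !fresE.
Qed.


Lemma CSV : 'C_S(V) = S.
Proof. by apply/setIidPl; rewrite centsC; apply: Vcent. Qed.

Lemma CF_of_F P Q f : F P Q f -> CF S F V P Q f.
Proof.
move=> Hf; have [gP gQ PS QS] := F_obj FS Hf.
pose P0 := Group gP; pose Q0 := Group gQ.
have [HY _] := F_fact FS Hf; have [_ gY _ YS] := F_obj FS HY.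
pose Y := Group gY.
have [R [cYR fcR]] := exist_fc (Y := Y) YS.
case/existsP: cYR => f0 /andP[H0 /eqP e0].
have [_ gR _ RS] := F_obj FS H0.
have H1 : F P R (fcomp P f0 f) := F_comp FS HY H0.
have H1S : F P0 S (fcomp P f0 f) := F_enl FS H1 RS (subxx S).
have eimg : fcomp P f0 f @: P0 = R.
  rewrite -e0 -imset_comp; apply: eq_in_imset => x xP; exact: fcompE.
have fc1 : fully_centralized S F (fcomp P f0 f @: P0) by rewrite eimg.
have [chi1 [Hc1 ec1 vc1]] := Ext H1S fc1.
have H0S : F Y S f0 := F_enl FS H0 RS (subxx S).
have fc2 : fully_centralized S F (f0 @: Y) by rewrite e0.
have [chi2 [Hc2 ec2 vc2]] := Ext H0S fc2.
pose YV := Group (@AV_group Y YS); pose PV := Group (@AV_group P0 PS).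
pose QV := Group (@AV_group Q0 QS).
have [Hc2' [g [Hg eg1 _]]] := F_fact FS Hc2.
have [_ gI _ IS] := F_obj FS Hc2'; pose I := Group gI.
have [Hc1' _] := F_fact FS Hc1.
have fY x : x \in P -> f x \in Y by move=> xP; apply: imset_f.
have Hc1I : F PV I chi1.
  apply: (@F_enl _ _ _ FS _ _ _ I Hc1' _ IS).
  apply/subsetP => _ /imsetP[x /mulsgP[a v aP vV ->] ->].
  have aPV : a \in P0 * V := subsetP (mulG_subl V P0) a aP.
  have vPV : v \in P0 * V := subsetP (mulG_subr P0 V) v vV.
  rewrite (F_mul FS Hc1 aPV vPV).
  rewrite ec1 // vc1 // fcompE //.
  have fav : f a * v \in YV by apply: mem_mulg => //; apply: fY.
  have -> : f0 (f a) * v = chi2 (f a * v).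
    have aYV : f a \in Y * V := subsetP (mulG_subl V Y) _ (fY a aP).
    have vYV : v \in Y * V := subsetP (mulG_subr Y V) v vV.
    rewrite (F_mul FS Hc2 aYV vYV).
    by rewrite ec2 ?fY // vc2.
  exact: imset_f.
have Ht := F_comp FS Hc1I Hg.
have Ht' : F PV QV (fcomp PV g chi1).
  apply: (@F_enl _ _ _ FS _ _ _ QV Ht); first exact: (mulSg V (F_im FS Hf)).
  exact: mul_subG QS VS.
rewrite /CF CSV PS QS Hf /=; apply/existsP; exists (fcomp PV g chi1).
rewrite Ht' /=; apply/andP; split; apply/forall_inP.
  move=> x xP; have xPV : x \in PV by rewrite (subsetP (mulG_subl V P0)).
  have fxYV : f x \in YV by rewrite (subsetP (mulG_subl V Y)) ?fY.
  rewrite fcompE // ec1 // fcompE // -ec2 ?fY //.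
  have := congr1 (fun k : {ffun gT -> gT} => k (f x)) eg1.
  by rewrite /= fcompE // fresE // => ->.
move=> v vV; have vPV : v \in PV by rewrite (subsetP (mulG_subr P0 V)).
have vYV : v \in YV by rewrite (subsetP (mulG_subr Y V)).
rewrite fcompE // vc1 //.
have := congr1 (fun k : {ffun gT -> gT} => k v) eg1.
by rewrite /= fcompE // fresE // vc2 // => ->.
Qed.

End Main.

Theorem proposition5p2 (gT : finGroupType) (p : nat) (S : {group gT})
    (F : {set gT} -> {set gT} -> pred {ffun gT -> gT})
    (L : linking_data gT) (V : {group gT}) :
  prime p -> p.-group S ->
  saturated_fusion_system S F p ->
  centric_linking_system S F L ->
  V \subset 'Z(S) ->
  weakly_closed F V ->
  p.-nat #|AutF F V| ->
  [/\ 'C_S(V) = S :> {set gT},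
      (forall P Q f, F P Q f = CF S F V P Q f) &
      (forall m : lmor L, CF S F V (ldom m) (lcod m) (lpi m))].
Proof.
move=> _ _ [FS satI satII] HL VZ wc pn; split.
- exact: (CSV VZ).
- move=> P Q f; apply/idP/idP; first exact: (CF_of_F FS satI satII VZ wc pn).
  by case/and4P.
- move=> m; apply: (CF_of_F FS satI satII VZ wc pn).
  by case: HL => _ [Hpi _ _] _ _ _; apply: Hpi.
Qed.
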